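(* Let $X$ be an infinite set. Then the symmetric monoid $\mathrm{Map}(X)$ of all maps $X\to X$ (under composition) is not sofic.
   Context: For a non-empty finite set $Y$, $\mathrm{Map}(Y)$ is the monoid of all maps $Y\to Y$ under composition (identity $\mathrm{Id}_Y$) with the Hamming metric $d_Y(f,g)=|\{y\in Y : f(y)\ne g(y)\}|/|Y|$. For a monoid $M$ with identity $1_M$, finite $K\subset M$ and $\varepsilon,\alpha>0$, a map $\varphi\colon M\to\mathrm{Map}(Y)$ is a $(K,\varepsilon)$-morphism if $d_Y(\varphi(k_1k_2),\varphi(k_1)\varphi(k_2))\le\varepsilon$ for all $k_1,k_2\in K$ and $d_Y(\varphi(1_M),\mathrm{Id}_Y)\le\varepsilon$; it is $(K,\alpha)$-injective if $d_Y(\varphi(k_1),\varphi(k_2))\ge\alpha$ for all distinct $k_1,k_2\in K$. $M$ is sofic if for every finite $K\subset M$ and every $\varepsilon>0$ there exist a non-empty finite set $Y$ and a $(K,1-\varepsilon)$-injective $(K,\varepsilon)$-morphism $\varphi\colon M\to\mathrm{Map}(Y)$. *)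

(* Defs.v *)
From mathcomp Require Import all_boot all_order all_algebra.
From mathcomp Require Import Rstruct.
From Stdlib Require Import List Rdefinitions.
Set Implicit Arguments. Unset Strict Implicit. Unset Printing Implicit Defensive.
Import Order.TTheory GRing.Theory Num.Theory.
Local Open Scope ring_scope.

Definition hamming (Y : finType) (f g : Y -> Y) : R :=
  (#|[pred y | f y != g y]|)%:R / (#|Y|)%:R.

(* A monoid is given by a carrier M, a product [mul] and an identity [one].
   A finite subset K of M is represented by a list.  The product in Map(Y)
   is composition: (f g)(y) = f (g y). *)
Definition KEps_morphism (M : Type) (mul : M -> M -> M) (one : M)
  (Y : finType) (phi : M -> Y -> Y) (K : list M) (eps : R) : Prop :=
  (forall k1 k2, In k1 K -> In k2 K ->
     hamming (phi (mul k1 k2)) (fun y => phi k1 (phi k2 y)) <= eps) /\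
  hamming (phi one) (fun y => y) <= eps.

Definition KAlpha_injective (M : Type) (Y : finType) (phi : M -> Y -> Y)
  (K : list M) (alpha : R) : Prop :=
  forall k1 k2, In k1 K -> In k2 K -> k1 <> k2 -> alpha <= hamming (phi k1) (phi k2).

Definition sofic (M : Type) (mul : M -> M -> M) (one : M) : Prop :=
  forall (K : list M) (eps : R), 0 < eps ->
    exists (Y : finType) (phi : M -> Y -> Y),
      (0 < #|Y|)%nat /\
      KEps_morphism mul one phi K eps /\
      KAlpha_injective phi K (1 - eps).

Definition infinite_type (X : Type) : Prop :=
  ~ exists s : list X, forall x : X, In x s.

Definition map_mul (X : Type) (f g : X -> X) : X -> X := fun x => f (g x).
Definition map_one (X : Type) : X -> X := fun x => x.

(* Main.v *)
From Stdlib Require Import Rdefinitions Lia Classical ClassicalEpsilon FunctionalExtensionality List.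
Require Import Defs.
From mathcomp Require Import all_boot all_order all_algebra.
From mathcomp Require Import Rstruct.
From mathcomp Require Import zify lra.
Set Implicit Arguments. Unset Strict Implicit. Unset Printing Implicit Defensive.
Import Order.TTheory GRing.Theory Num.Theory.
Local Open Scope ring_scope.

Lemma comb (Y : finType) (a b c e : Y -> Y) :
  (#|[pred y | c y != e y]| <=
   #|[pred y | e y != b (a y)]| + 2 * #|[pred y | e y != y]| +
   #|[pred y | c y != a (b y)]|)%N.
Proof.
set G := [set y | b (a y) == y].
set F := [set z | a (b z) == z].
set D1 := [set y | e y != b (a y)].
set D2 := [set y | e y != y].
set D3 := [set y | c y != a (b y)].
set D4 := [set y | c y != e y].
have -> : #|[pred y | c y != e y]| = #|D4| by rewrite cardsE.
have -> : #|[pred y | e y != b (a y)]| = #|D1| by rewrite cardsE.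
have -> : #|[pred y | e y != y]| = #|D2| by rewrite cardsE.
have -> : #|[pred y | c y != a (b y)]| = #|D3| by rewrite cardsE.
have h1 : (#|~: G| <= #|D1| + #|D2|)%N.
  apply: leq_trans (leq_card_setU D1 D2).
  apply: subset_leq_card; apply/subsetP => y.
  rewrite !inE => H; apply/orP; case: (eqVneq (e y) y) => E; last by right.
  by left; rewrite E eq_sym.
have h2 : (#|G| <= #|F|)%N.
  rewrite -(@card_in_imset _ _ a G).
    apply: subset_leq_card; apply/subsetP => z /imsetP [y]; rewrite inE => /eqP Hy ->.
    by rewrite inE Hy.
  move=> y1 y2; rewrite !inE => /eqP H1 /eqP H2 E.
  by rewrite -H1 -H2 E.
have h3 : (#|D4| <= #|D3| + #|~: F| + #|D2|)%N.
  apply: leq_trans (leq_add (leq_card_setU D3 (~: F)) (leqnn #|D2|)).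
  apply: leq_trans (leq_card_setU (D3 :|: ~: F) D2).
  apply: subset_leq_card; apply/subsetP => y.
  rewrite !inE => H.
  move: H; case: (c y =P a (b y)) => [->|//]; case: (a (b y) =P y) => [->|//].
  by rewrite eq_sym => ->; rewrite orbT.
have hG := cardsC G. have hF := cardsC F.
lia.
Qed.
Section Inf.
Variable X : Type.
Hypothesis hX : infinite_type X.

Lemma ex_notin (l : list X) : exists y, ~ In y l.
Proof.
apply: NNPP => H; apply: hX; exists l => x; apply: NNPP => Hx; apply: H; by exists x.
Qed.

Definition pick (l : list X) : X := proj1_sig (constructive_indefinite_description _ (ex_notin l)).
Lemma pickP l : ~ In (pick l) l.
Proof. exact: (proj2_sig (constructive_indefinite_description _ (ex_notin l))). Qed.

Fixpoint L (n : nat) : list X := match n with 0 => nil | S n => pick (L n) :: L n end.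
Definition xs n := pick (L n).

Lemma xs_in m n : (m < n)%coq_nat -> In (xs m) (L n).
Proof.
elim: n => [|n IH] H; first by inversion H.
simpl. inversion H; first by left.
right; apply: IH; lia.
Qed.

Lemma xs_inj m n : xs m = xs n -> m = n.
Proof.
move=> E; case: (PeanoNat.Nat.lt_trichotomy m n) => [H|[//|H]].
- have := @pickP (L n); rewrite -/(xs n) -E => F; by case: F; apply: xs_in.
- have := @pickP (L m); rewrite -/(xs m) E => F; by case: F; apply: xs_in.
Qed.

Definition idx (y : X) : option nat :=
  match excluded_middle_informative (exists n, y = xs n) with
  | left H => Some (proj1_sig (constructive_indefinite_description _ H))
  | right _ => None end.

Lemma idx_some y n : idx y = Some n -> y = xs n.
Proof.
rewrite /idx; case: excluded_middle_informative => // H [<-].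
exact: (proj2_sig (constructive_indefinite_description _ H)).
Qed.

Lemma idx_xs n : idx (xs n) = Some n.
Proof.
case E: (idx (xs n)) => [m|].
  by rewrite (xs_inj (idx_some E)).
move: E; rewrite /idx; case: excluded_middle_informative => // H _.
by case: H; exists n.
Qed.

Definition sh (y : X) : X := match idx y with Some n => xs (S n) | None => y end.
Definition ush (y : X) : X := match idx y with Some (S n) => xs n | _ => y end.

Lemma ush_sh y : ush (sh y) = y.
Proof.
rewrite /sh; case E: (idx y) => [n|].
  by rewrite /ush idx_xs (idx_some E).
by rewrite /ush E.
Qed.

Lemma sh_ush_ne : sh (ush (xs 0)) <> xs 0.
Proof.
rewrite /ush idx_xs /sh idx_xs => /xs_inj; discriminate.
Qed.
End Inf.

Lemma real_part (N d1 d2 d3 d4 : nat) (HN : (0 < N)%N)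
  (H : (d4 <= d1 + 2 * d2 + d3)%N)
  (h1 : d1%:R / N%:R <= 1/10 :> R) (h2 : d2%:R / N%:R <= 1/10 :> R)
  (h3 : d3%:R / N%:R <= 1/10 :> R) (h4 : 1 - 1/10 <= d4%:R / N%:R :> R) : False.
Proof.
have n0 : 0 < N%:R :> R by rewrite ltr0n.
rewrite ler_pdivrMr // in h1. rewrite ler_pdivrMr // in h2. rewrite ler_pdivrMr // in h3.
rewrite ler_pdivlMr // in h4.
have : d4%:R <= (d1 + 2 * d2 + d3)%:R :> R by rewrite ler_nat.
rewrite !natrD => H'.
rewrite addr0 in H'. lra.
Qed.

Theorem corollary5p8 (X : Type) (hX : infinite_type X) :
  ~ sofic (@map_mul X) (@map_one X).
Proof.
move=> HS.
pose s := sh hX. pose t := ush hX.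
have [|Y [phi [HY [[Hm H1] Hi]]]] := HS [:: s; t; map_one (X:=X); map_mul s t] (1/10).
  lra.
have Hts : map_mul t s = map_one (X:=X).
  by apply: functional_extensionality => y; rewrite /map_mul /map_one /s /t ush_sh.
have i1 : In s [:: s; t; map_one (X:=X); map_mul s t] by left.
have i2 : In t [:: s; t; map_one (X:=X); map_mul s t] by right; left.
have i3 : In (map_one (X:=X)) [:: s; t; map_one (X:=X); map_mul s t] by right; right; left.
have i4 : In (map_mul s t) [:: s; t; map_one (X:=X); map_mul s t] by right; right; right; left.
have A1 := Hm t s i2 i1.
have A3 := Hm s t i1 i2.
have A4 := Hi (map_mul s t) (map_one (X:=X)) i4 i3.
rewrite Hts in A1.
have {}A4 := A4 (fun E => sh_ush_ne (f_equal (fun f => f (xs hX 0)) E)).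
have C := comb (phi s) (phi t) (phi (map_mul s t)) (phi (map_one (X:=X))).
apply: (real_part HY C).
- exact: A1.
- exact: H1.
- exact: A3.
- exact: A4.
Qed.
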